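(* Let $k$ be a difference field of characteristic $0$, $R=k\{y_1,\ldots,y_n\}$, and let $I$ be a monomial $\sigma$-ideal of $R$ with support set $S=\{\mathbf{u}\in\mathbb{N}[x]^n:\mathbf{y}^{\mathbf{u}}\in I\}$ (so $I=\bigoplus_{\mathbf{u}\in S}k\mathbf{y}^{\mathbf{u}}$). Then: (1) $I$ is radical iff for all $m\in\mathbb{N}\setminus\{0\}$ and $\mathbf{u}\in\mathbb{N}[x]^n$, $m\mathbf{u}\in S$ implies $\mathbf{u}\in S$; (2) $I$ is reflexive iff for all $\mathbf{u}\in\mathbb{N}[x]^n$, $x\mathbf{u}\in S$ implies $\mathbf{u}\in S$; (3) $I$ is perfect iff for all nonzero $g\in\mathbb{N}[x]$ and $\mathbf{u}\in\mathbb{N}[x]^n$, $g\mathbf{u}\in S$ implies $\mathbf{u}\in S$; (4) $I$ is prime iff for all $\mathbf{u},\mathbf{v}\in\mathbb{N}[x]^n$, $\mathbf{u}+\mathbf{v}\in S$ implies $\mathbf{u}\in S$ or $\mathbf{v}\in S$.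
   Context: A difference field is a field $k$ with a ring endomorphism $\sigma$; $R=k\{y_1,\ldots,y_n\}$ is the polynomial ring over $k$ in the variables $\sigma^j(y_i)$, with $\sigma$ extended naturally. For $p=\sum_i c_ix^i\in\mathbb{N}[x]$ and $a\in R$, $a^p=\prod_i(\sigma^i(a))^{c_i}$; for $\mathbf{u}\in\mathbb{N}[x]^n$, $\mathbf{y}^{\mathbf{u}}=y_1^{u_1}\cdots y_n^{u_n}$; $\mathbb{N}[x]^n$ is a module over the semiring $\mathbb{N}[x]$ coordinatewise. A $\sigma$-ideal is an ideal $I$ with $\sigma(I)\subseteq I$; monomial if generated by monomials. $I$ is reflexive if $\sigma(a)\in I$ implies $a\in I$; perfect if $a^g\in I$ implies $a\in I$ for every nonzero $g\in\mathbb{N}[x]$; prime means prime as an ideal. *)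

(* Defs.v *)
From HB Require Import structures.
From mathcomp Require Import all_boot all_order all_algebra.
From mathcomp Require Import finmap.
From mathcomp.multinomials Require Import monalg.

Set Implicit Arguments.
Unset Strict Implicit.
Unset Printing Implicit Defensive.
Import GRing.Theory.
Local Open Scope ring_scope.

(* The difference polynomial ring  R = k{y_1,...,y_n}  over a field k:
   the commutative polynomial ring over k in the (infinitely many) variables
   sigma^j(y_i), i < n, j in nat, encoded as the variable (i, j). *)
Definition dpoly (k : fieldType) (n : nat) : Type :=
  {malg k[{cmonom ('I_n * nat)%type}]}.

Definition dvar (k : fieldType) (n : nat) (i : 'I_n) (j : nat) : dpoly k n :=
  << ucm (i, j) >>.

Definition dsigma (k : fieldType) (n : nat) (s : {rmorphism k -> k})
  (f : dpoly k n) : dpoly k n :=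
  mmap (fun c : k => (s c)%:MP)
       (fun m : {cmonom ('I_n * nat)%type} =>
          \prod_(ij <- finsupp m) dvar k ij.1 ij.2.+1 ^+ m ij) f.

Definition NXn (n : nat) : Type := 'I_n -> {poly nat}.

(* the monomial y^u = prod_i y_i^(u_i), where for p = sum_j c_j x^j,
   y_i^p = prod_j (sigma^j y_i)^(c_j) *)
Definition ymon (k : fieldType) (n : nat) (u : NXn n) : dpoly k n :=
  \prod_(i < n) \prod_(j < size (u i)) dvar k i j ^+ nth 0%N (polyseq (u i)) j.

(* a^g = prod_i (sigma^i a)^(c_i) for g = sum_i c_i x^i in N[x] *)
Definition dpow (k : fieldType) (n : nat) (s : {rmorphism k -> k})
  (a : dpoly k n) (g : {poly nat}) : dpoly k n :=
  \prod_(i < size g) (iter i (dsigma s) a) ^+ nth 0%N (polyseq g) i.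

Definition is_ideal (R : comNzRingType) (I : R -> Prop) : Prop :=
  [/\ I 0, (forall a b, I a -> I b -> I (a + b)) & (forall r a, I a -> I (r * a))].

Definition is_sigma_ideal (k : fieldType) (n : nat) (s : {rmorphism k -> k})
  (I : dpoly k n -> Prop) : Prop :=
  is_ideal I /\ (forall a, I a -> I (dsigma s a)).

Definition is_monomial_ideal (k : fieldType) (n : nat) (I : dpoly k n -> Prop) : Prop :=
  exists T : NXn n -> Prop, forall f : dpoly k n,
    I f <-> exists (m : nat) (c : 'I_m -> dpoly k n) (w : 'I_m -> NXn n),
      (forall j, T (w j)) /\ f = \sum_(j < m) c j * ymon k (w j).

Definition is_radical (R : comNzRingType) (I : R -> Prop) : Prop :=
  forall (a : R) (m : nat), (0 < m)%N -> I (a ^+ m) -> I a.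

Definition is_reflexive (k : fieldType) (n : nat) (s : {rmorphism k -> k})
  (I : dpoly k n -> Prop) : Prop :=
  forall a, I (dsigma s a) -> I a.

Definition is_perfect (k : fieldType) (n : nat) (s : {rmorphism k -> k})
  (I : dpoly k n -> Prop) : Prop :=
  forall (a : dpoly k n) (g : {poly nat}), g != 0 -> I (dpow s a g) -> I a.

Definition is_prime_ideal (R : comNzRingType) (I : R -> Prop) : Prop :=
  is_ideal I /\ ~ I 1 /\ (forall a b : R, I (a * b) -> I a \/ I b).

Definition supp_set (k : fieldType) (n : nat) (I : dpoly k n -> Prop) (u : NXn n) : Prop :=
  I (ymon k u).

(* Main.v *)
Require Import Defs.
From HB Require Import structures.
From mathcomp Require Import all_boot all_order all_algebra.
From mathcomp Require Import finmap.
From mathcomp.multinomials Require Import monalg.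
From mathcomp Require Import ring.
From Stdlib Require Classical_Prop ClassicalEpsilon.
Import GRing.Theory.
Local Open Scope ring_scope.
Set Implicit Arguments.
Unset Strict Implicit.

Section Mon.
Variable (I : choiceType).
Local Notation M := (cmonom I).

Definition mexp (m : M) (e : nat) : M := \big[mmul/mone]_(j < e) m.

Lemma cm_prod (T : Type) (r : seq T) (P : pred T) (F : T -> M) x :
  (\big[mmul/mone]_(i <- r | P i) F i) x = (\sum_(i <- r | P i) F i x)%N.
Proof. by apply: (big_morph (fun m : M => m x)) => [m1 m2|]; rewrite ?cmM ?cm1. Qed.

Lemma mexpE m e x : mexp m e x = (e * m x)%N.
Proof. by rewrite cm_prod sum_nat_const card_ord. Qed.

End Mon.


Section Main.
Variables (k : fieldType) (n : nat).
Local Notation X := ('I_n * nat)%type.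
Local Notation M := (cmonom X).
Local Notation R := (dpoly k n).

Definition Xm (m : M) : R := << m >>.

Lemma XmM m1 m2 : Xm (mmul m1 m2) = Xm m1 * Xm m2.
Proof. by rewrite /Xm malgM_def fgmulUU mulr1. Qed.

Lemma Xm1 : Xm mone = 1.
Proof. by []. Qed.

Lemma Xm_prod (T : Type) (r : seq T) (P : pred T) (F : T -> M) :
  Xm (\big[mmul/mone]_(i <- r | P i) F i) = \prod_(i <- r | P i) Xm (F i).
Proof. by apply: (big_morph Xm) => [m1 m2|]; rewrite ?XmM ?Xm1. Qed.

Lemma Xm_exp m e : Xm (mexp m e) = Xm m ^+ e.
Proof. by rewrite Xm_prod prodr_const card_ord. Qed.

Lemma sum_delta (m : M) y : (\sum_(x <- finsupp m) m x * (x == y))%N = m y.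
Proof.
case: (boolP (y \in finsupp m)) => Hy.
  rewrite (bigD1_seq y) //= ?eqxx ?muln1 big1 ?addn0 // => x /negbTE ->.
  by rewrite muln0.
rewrite big1_seq; last by move=> x /andP[_ Hx]; case: eqP => [Exy|]; [move: Hy; rewrite -Exy Hx | rewrite muln0].
by move: Hy; rewrite -cmE_eq0 => /eqP.
Qed.

Definition shift (m : M) : M :=
  \big[mmul/mone]_(x <- finsupp m) mexp (ucm (x.1, x.2.+1)) (m x).

Lemma shiftE m (x : X) : shift m x = if x.2 is j.+1 then m (x.1, j) else 0%N.
Proof.
rewrite cm_prod; case: x => i [|j] /=.
  by rewrite big1 // => x _; rewrite mexpE ucmE; case: eqP => //; rewrite muln0.
rewrite -(sum_delta m (i, j)); apply: eq_bigr => -[i' j'] _.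
by rewrite mexpE ucmE /= !xpair_eqE eqSS.
Qed.

Lemma shift_inj : injective shift.
Proof.
move=> m1 m2 E; apply/eqP/cmP => -[i j].
by have := shiftE m1 (i, j.+1); rewrite E shiftE.
Qed.


Variable (s : {rmorphism k -> k}).

Lemma hshift (m : M) :
  \prod_(ij <- finsupp m) dvar k ij.1 ij.2.+1 ^+ m ij = Xm (shift m).
Proof. by rewrite /shift Xm_prod; apply: eq_bigr => x _; rewrite Xm_exp. Qed.

Lemma dsigmaE (a : R) :
  dsigma s a = \sum_(m <- msupp a) (s a@_m)%:MP * Xm (shift m).
Proof. by rewrite /dsigma mmapE; apply: eq_bigr => m _; rewrite hshift. Qed.

Lemma dsigmaX m : dsigma s (Xm m) = Xm (shift m).
Proof.
rewrite dsigmaE /Xm msuppU1 big_seq_fset1 mcoeffUU rmorph1 mpolyC1E mul1r //.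
Qed.

Lemma dsigma_coef (a : R) m : (dsigma s a)@_(shift m) = s (a@_m).
Proof.
rewrite dsigmaE raddf_sum /=.
under eq_bigr => m' _ do rewrite mcoeffCM /Xm mcoeffU1 (inj_eq shift_inj).
case: (boolP (m \in msupp a)) => Hm.
  rewrite (bigD1_seq m) //; last exact: fset_uniq.
  have -> : (m == m) = true by apply/eqP.
  rewrite mulr1 big1 => [|x /negbTE ->]; last by rewrite mulr0.
  by rewrite /= addr0.
rewrite big1_seq; last first.
  by move=> x /andP[_ Hx]; case: eqP => [Exy|]; [move: Hm; rewrite -Exy Hx | rewrite mulr0].
by rewrite mcoeff_outdom // rmorph0.
Qed.

Lemma dsigma_supp (a : R) m : m \in msupp a -> shift m \in msupp (dsigma s a).
Proof. by rewrite -!mcoeff_neq0 dsigma_coef fmorph_eq0. Qed.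

Lemma iter_dsigma_supp (a : R) m t :
  m \in msupp a -> iter t shift m \in msupp (iter t (dsigma s) a).
Proof.
move=> Hm; elim: t => [|t IH]; first exact: Hm.
rewrite !iterS; exact: dsigma_supp.
Qed.

Lemma iter_dsigmaX m t : iter t (dsigma s) (Xm m) = Xm (iter t shift m).
Proof.
elim: t => [|t IH]; first reflexivity.
rewrite iterS IH dsigmaX; reflexivity.
Qed.


Definition mon (u : NXn n) : M :=
  \big[mmul/mone]_(i < n) \big[mmul/mone]_(j < size (u i))
     mexp (ucm (i, nat_of_ord j)) ((u i)`_j)%R.

Lemma ymonE u : ymon k u = Xm (mon u).
Proof.
rewrite /ymon /mon Xm_prod; apply: eq_bigr => i _.
rewrite Xm_prod; apply: eq_bigr => j _; by rewrite Xm_exp.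
Qed.

Lemma sum_ord_delta N (F : nat -> nat) j :
  (\sum_(j' < N) F j' * (nat_of_ord j' == j))%N = if (j < N)%N then F j else 0%N.
Proof.
case: ltnP => H.
  rewrite (bigD1 (Ordinal H)) //= eqxx muln1 big1 ?addn0 // => x.
  by rewrite -val_eqE /= => /negbTE ->; rewrite muln0.
rewrite big1 // => x _; case: eqP => [E|]; last by rewrite muln0.
by move: (ltn_ord x); rewrite E ltnNge H.
Qed.

Lemma mexpX (m : M) e (x : X) : mexp m e x = (e * m x)%N.
Proof. exact: mexpE. Qed.
Lemma ucmX (x y : X) : ucm x y = (x == y) :> nat.
Proof. exact: ucmE. Qed.

Lemma cmX_eq0 (m : M) (x : X) : (m x == 0%N) = (x \notin finsupp m).
Proof. exact: cmE_eq0. Qed.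
Lemma cmMX (m1 m2 : M) (x : X) : mmul m1 m2 x = (m1 x + m2 x)%N.
Proof. exact: cmM. Qed.

Lemma monE u i j : mon u (i, j) = ((u i)`_j)%R.
Proof.
rewrite cm_prod. under eq_bigr => i' _ do rewrite cm_prod.
under eq_bigr => i' _ do under eq_bigr => j' _ do rewrite mexpX ucmX xpair_eqE.
rewrite (bigD1 i) //= [X in (_ + X)%N]big1 ?addn0.
  have -> : (i == i) = true by apply/eqP.
  under eq_bigr => j' _ do rewrite andTb.
  rewrite sum_ord_delta; case: ltnP => // H.
  by rewrite nth_default.
move=> i' /negbTE Hi. apply: big1 => j' _. by rewrite Hi muln0.
Qed.

Lemma monP (u v : NXn n) : (forall i j, (u i)`_j = (v i)`_j) -> mon u = mon v.
Proof. by move=> H; apply/eqP/cmP => -[i j]; rewrite !monE H. Qed.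

Lemma mon_surj (m : M) : exists u : NXn n, mon u = m.
Proof.
pose N := (\max_(x <- finsupp m) x.2.+1)%N.
exists (fun i => \poly_(j < N) m (i, j)); apply/eqP/cmP => -[i j].
rewrite monE coef_poly; case: ltnP => // H.
symmetry; apply/eqP; rewrite cmX_eq0; apply/negP => Hx.
have := @leq_bigmax_seq _ _ xpredT (fun x : X => x.2.+1) _ Hx isT.
by rewrite -/N /= ltnNge H.
Qed.


Lemma natmulE (x m : nat) : (x *+ m)%R = (m * x)%N.
Proof. by elim: m => // m IH; rewrite mulrS IH mulSn. Qed.

Lemma monD (u v : NXn n) : mon (fun i => u i + v i) = mmul (mon u) (mon v).
Proof. by apply/eqP/cmP => -[i j]; rewrite cmMX !monE coefD. Qed.

Lemma monMn (u : NXn n) m : mon (fun i => u i *+ m) = mexp (mon u) m.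
Proof. by apply/eqP/cmP => -[i j]; rewrite mexpX !monE coefMn natmulE. Qed.

Lemma monX (u : NXn n) : mon (fun i => 'X * u i) = shift (mon u).
Proof.
apply/eqP/cmP => -[i j]; rewrite shiftE monE coefXM /=.
by case: j => // j; rewrite monE.
Qed.

Lemma mexp_mexp (m : M) a b : mexp (mexp m a) b = mexp m (a * b).
Proof. by apply/eqP/cmP => x; rewrite !mexpX mulnA (mulnC a b). Qed.

Lemma iter_shiftE (m : M) t i j :
  iter t shift m (i, j) = if (t <= j)%N then m (i, (j - t)%N) else 0%N.
Proof.
elim: t j => [|t IH] j /=; first by rewrite subn0.
rewrite shiftE /=; case: j => [|j] //; rewrite IH ltnS subSS //.
Qed.

Definition dpowm (m : M) (g : {poly nat}) : M :=
  \big[mmul/mone]_(t < size g) mexp (iter t shift m) (g`_t)%R.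

Lemma dpowX (m : M) g : dpow s (Xm m) g = Xm (dpowm m g).
Proof.
rewrite /dpow /dpowm Xm_prod; apply: eq_bigr => t _.
by rewrite Xm_exp iter_dsigmaX.
Qed.

Lemma sum_ext N1 N2 (F : nat -> nat) :
  (forall t, (N1 <= t)%N -> F t = 0%N) -> (forall t, (N2 <= t)%N -> F t = 0%N) ->
  (\sum_(t < N1) F t = \sum_(t < N2) F t)%N.
Proof.
wlog le12 : N1 N2 / (N1 <= N2)%N.
  move=> W H1 H2; case: (leqP N1 N2) => H; first exact: W.
  by symmetry; apply: W => //; apply: ltnW.
move=> H1 _; rewrite (big_ord_widen N2 F le12) big_mkcond /=.
by apply: eq_bigr => t _; case: ltnP => // /H1 ->.
Qed.

Lemma monM (g : {poly nat}) (u : NXn n) :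
  mon (fun i => g * u i) = dpowm (mon u) g.
Proof.
apply/eqP/cmP => -[i j]; rewrite monE coefM /dpowm cm_prod.
under [RHS]eq_bigr => t _ do rewrite mexpX iter_shiftE monE.
pose F := fun t : nat => if (t <= j)%N then ((g`_t)%R * ((u i)`_(j - t))%R)%N else 0%N.
transitivity (\sum_(t < j.+1) F t)%N.
  by apply: eq_bigr => t _; rewrite /F -ltnS ltn_ord.
transitivity (\sum_(t < size g) F t)%N.
  apply: sum_ext.
    by move=> t; rewrite /F ltnNge => /negbTE ->.
  by move=> t Ht; rewrite /F nth_default //; case: ifP.
by apply: eq_bigr => t _; rewrite /F; case: ifP => // _; rewrite muln0.
Qed.


Lemma malgUE (c : k) (m : M) : << c *g m >> = c%:MP * Xm m :> R.
Proof. by rewrite /Xm malgM_def fgmulUU mulr1 mul1m. Qed.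

Section Ideal.
Variable I : R -> Prop.
Hypothesis HI : is_ideal I.
Let S' m := I (Xm m).

Lemma I0 : I 0. Proof. by case: HI. Qed.
Lemma ID a b : I a -> I b -> I (a + b). Proof. by case: HI => _ H _; apply: H. Qed.
Lemma IM r a : I a -> I (r * a). Proof. by case: HI => _ _ H; apply: H. Qed.

Lemma I_sum (T : eqType) (r : seq T) (P : pred T) (F : T -> R) :
  (forall i, i \in r -> P i -> I (F i)) -> I (\sum_(i <- r | P i) F i).
Proof.
move=> H; rewrite big_seq_cond; apply: (big_ind I) => //.
- exact: I0.
- exact: ID.
by move=> i /andP[]; apply: H.
Qed.

Lemma S_mul w w' : S' w -> S' (mmul w w').
Proof. by rewrite /S' XmM mulrC; apply: IM. Qed.

Lemma S_le (w m : M) : S' w -> (forall x : X, (w x <= m x)%N) -> S' m.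
Proof.
move=> Sw H; have -> : m = mmul w (divcm m w).
  by apply/eqP/cmP => x; rewrite cmMX divcmE subnKC.
exact: S_mul.
Qed.

Lemma char_in f : (forall m, m \in msupp f -> S' m) -> I f.
Proof.
move=> H; rewrite (monalgE f); apply: I_sum => m Hm _.
by rewrite malgUE; apply: IM; apply: H.
Qed.

Lemma char_out : is_monomial_ideal I -> forall f, I f -> forall m, m \in msupp f -> S' m.
Proof.
move=> [T HT] f /HT [N [c [w [Tw ->]]]] m Hm.
have [j Hj] : exists j, m \in msupp (c j * ymon k (w j)).
  apply/existsP; apply: contraLR Hm; rewrite negb_exists => /forallP Hall.
  rewrite -mcoeff_eq0 raddf_sum /=; apply/eqP; apply: big1 => j _.
  by apply/eqP; rewrite mcoeff_eq0; apply: Hall.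
move: Hj; rewrite ymonE => /msuppM_le [k1 [k2 [_ ]]].
rewrite /Xm msuppU1 => /fset1P -> ->.
rewrite /S' mulmC; apply: S_mul.
rewrite /S' -ymonE; apply/HT; exists 1%N, (fun _ => 1), (fun _ => w j); split => //.
by rewrite big_ord1 mul1r.
Qed.

End Ideal.

End Main.

Lemma le_mdeg (I : choiceType) (m : cmonom I) x : (m x <= mdeg m)%N.
Proof.
rewrite mdegE; case: (boolP (x \in finsupp m)) => Hx.
  by rewrite (bigD1_seq x) ?fset_uniq //= leq_addr.
by move: Hx; rewrite -cmE_eq0 => /eqP ->.
Qed.

Section Dom.
Variables (k : fieldType) (n : nat).
Local Notation X := ('I_n * nat)%type.
Local Notation M := (cmonom X).
Local Notation R := (dpoly k n).

Definition wt (D : seq X) (B : nat) (m : M) : nat :=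
  foldr (fun x acc => m x + B * acc)%N 0%N D.

Lemma wtM D B m1 m2 : wt D B (mmul m1 m2) = (wt D B m1 + wt D B m2)%N.
Proof. by elim: D => //= x D ->; rewrite cmM mulnDr addnACA. Qed.

Lemma wt1 D B : wt D B mone = 0%N.
Proof. by elim: D => //= x D ->; rewrite cm1 muln0. Qed.

Definition kron (D : seq X) (B : nat) (m : M) : {poly k} := 'X^(wt D B m).

Lemma kron_mmorph D B : mmorphism (kron D B).
Proof. by split; [move=> x y; rewrite /kron wtM exprD | rewrite /kron wt1 expr0]. Qed.

HB.instance Definition _ D B := isMultiplicative.Build M {poly k} (kron D B) (kron_mmorph D B).

Lemma wt_eq (D : seq X) (B : nat) (m1 m2 : M) : (forall x, x \in D -> (m1 x < B)%N /\ (m2 x < B)%N) ->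
  wt D B m1 = wt D B m2 -> forall x, x \in D -> m1 x = m2 x.
Proof.
elim: D => // y D IH H /= E.
have [H1 H2] := H y (mem_head _ _).
have Ey : m1 y = m2 y.
  have := congr1 (modn^~ B) E.
  by rewrite ![(m1 y + _)%N]addnC ![(m2 y + _)%N]addnC !(mulnC B) !modnMDl !modn_small.
move: E; rewrite Ey => /addnI E.
have Bpos : (0 < B)%N by apply: leq_ltn_trans H1.
have E' : wt D B m1 = wt D B m2 by apply/eqP; rewrite -(eqn_pmul2l Bpos) E.
move=> x; rewrite inE => /orP[/eqP -> //|Hx].
by apply: IH => // z Hz; apply: H; rewrite inE Hz orbT.
Qed.

Lemma phiE D B (a : R) :
  mmap (@polyC k) (kron D B) a = \sum_(m <- msupp a) (a@_m)%:P * 'X^(wt D B m).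
Proof. by rewrite mmapE. Qed.

Lemma phi_neq0 D B (a : R) m0 : m0 \in msupp a ->
  {in msupp a &, injective (wt D B)} ->
  mmap (@polyC k) (kron D B) a != 0.
Proof.
move=> Hm0 Hinj; apply/negP => /eqP E.
have := congr1 (fun p : {poly k} => p`_(wt D B m0)) E.
rewrite phiE coef_sum coef0 /=.
under eq_bigr => m _ do rewrite coefCM coefXn.
rewrite (bigD1_seq m0) ?fset_uniq //= eqxx mulr1 big1_seq.
  by rewrite addr0 => /eqP; rewrite mcoeff_eq0 Hm0.
move=> m /andP[Hne Hm]; case: eqP => [Ew|]; last by rewrite mulr0.
by move: Hne; rewrite (Hinj _ _ Hm Hm0 (esym Ew)) eqxx.
Qed.

Lemma dpoly_dom (a b : R) : a * b = 0 -> a = 0 \/ b = 0.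
Proof.
move=> Eab.
case: (eqVneq a 0) => [->|Ha]; first by left.
case: (eqVneq b 0) => [->|Hb]; first by right.
exfalso.
pose sq := (msupp a ++ msupp b : seq M).
pose D := flatten (map (fun m : M => (finsupp m : seq X)) sq).
pose B := (\max_(m <- sq) mdeg m).+1.
have Hbd : forall m, m \in sq -> forall x, (m x < B)%N.
  move=> m Hm x; rewrite ltnS; apply: leq_trans (le_mdeg m x) _.
  exact: (@leq_bigmax_seq _ _ xpredT (fun m : M => mdeg m) _ Hm isT).
have HD : forall m, m \in sq -> forall x, x \notin D -> m x = 0%N.
  move=> m Hm x HxD; apply/eqP; rewrite cmE_eq0; apply: contra HxD => Hx.
  by apply/flatten_mapP; exists m.
have Hinj : {in sq &, injective (wt D B)}.
  move=> m1 m2 H1 H2 E; apply/eqP/cmP => x.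
  case: (boolP (x \in D)) => Hx.
    by apply: (wt_eq _ E) => // z _; split; apply: Hbd.
  by rewrite !HD.
have Hinja : {in msupp a &, injective (wt D B)}.
  by move=> m1 m2 H1 H2; apply: Hinj; rewrite mem_cat ?H1 ?H2.
have Hinjb : {in msupp b &, injective (wt D B)}.
  by move=> m1 m2 H1 H2; apply: Hinj; rewrite mem_cat ?H1 ?H2 ?orbT.
have [ma Hma] : exists m, m \in msupp a.
  case E: (msupp a) Ha => [[|m l] Hl] //=; last by exists m; rewrite inE eqxx.
  by rewrite -msupp_eq0; move=> H; case/eqP: H; apply/fsetP => x; rewrite inE E.
have [mb Hmb] : exists m, m \in msupp b.
  case E: (msupp b) Hb => [[|m l] Hl] //=; last by exists m; rewrite inE eqxx.
  by rewrite -msupp_eq0; move=> H; case/eqP: H; apply/fsetP => x; rewrite inE E.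
have := (mmap_is_multiplicative (f := @polyC k) (h := kron D B)).1 a b.
rewrite Eab.
have -> : mmap (@polyC k) (kron D B) 0 = 0 by rewrite phiE msupp0 big_nil.
move/esym/eqP; rewrite mulf_eq0 => /orP[].
  by apply/negP; apply: phi_neq0 Hma Hinja.
by apply/negP; apply: phi_neq0 Hmb Hinjb.
Qed.

End Dom.

Section PV.
Variables (k : fieldType) (n : nat).
Local Notation X := ('I_n * nat)%type.
Local Notation M := (cmonom X).
Local Notation R := (dpoly k n).
Variable V : pred X.

Definition hits (m : M) : bool := has V (finsupp m).
Definition PV (f : R) : bool := all hits (msupp f).

Lemma hitsP (m : M) : reflect (exists2 x, x \in finsupp m & V x) (hits m).
Proof. exact: hasP. Qed.

Lemma hitsM (m1 m2 : M) : hits (mmul m1 m2) = hits m1 || hits m2.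
Proof.
apply/hitsP/orP => [[x]|].
  rewrite mdomD inE => /orP[] Hx Vx; [left|right]; apply/hitsP; by exists x.
by case=> /hitsP [x Hx Vx]; exists x => //; rewrite mdomD inE Hx ?orbT.
Qed.

Lemma hits1 : hits mone = false.
Proof. by apply/hitsP => -[x]; rewrite mdom1. Qed.

Lemma PVP (f : R) : reflect (forall m, m \in msupp f -> hits m) (PV f).
Proof. exact: allP. Qed.

Lemma PVD (a b : R) : PV a -> PV b -> PV (a + b).
Proof.
move=> /PVP Ha /PVP Hb; apply/PVP => m /(fsubsetP (msuppD_le _ _)).
by rewrite inE => /orP[/Ha|/Hb].
Qed.

Lemma PVN (a : R) : PV a -> PV (- a).
Proof. by rewrite /PV msuppN. Qed.

Lemma PVM (r a : R) : PV a -> PV (r * a).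
Proof.
move=> /PVP Ha; apply/PVP => m /msuppM_le [k1 [k2 [_ H2 ->]]].
by rewrite hitsM (Ha _ H2) orbT.
Qed.

Lemma supp_filter (r : seq M) (Q : pred M) (c : M -> k) (P : pred M) :
  (forall m, Q m -> P m) ->
  all P (msupp (\sum_(m <- r | Q m) << c m *g m >> : R)).
Proof.
move=> H; apply: (big_ind (fun g : R => all P (msupp g))).
- by rewrite msupp0.
- move=> g1 g2 /allP H1 /allP H2; apply/allP => m /(fsubsetP (msuppD_le _ _)).
  by rewrite inE => /orP[/H1|/H2].
move=> m Qm; apply/allP => m' /(fsubsetP msuppU_le); rewrite inE => /eqP ->.
exact: H.
Qed.

Lemma split_PV (a : R) : exists a0 a1, [/\ a = a0 + a1, PV a1,
   all (fun m => ~~ hits m) (msupp a0) & (a0 = 0 -> PV a)].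
Proof.
pose a0 := \sum_(m <- msupp a | ~~ hits m) << a@_m *g m >> : R.
pose a1 := \sum_(m <- msupp a | hits m) << a@_m *g m >> : R.
have Ea : a = a0 + a1 by rewrite {1}(monalgE a) (bigID (fun m => ~~ hits m)) /= addrC;
  rewrite addrC; congr (_ + _); apply: eq_bigl => m; rewrite negbK.
have H1 : PV a1 by apply: supp_filter.
exists a0, a1; split => //; first by apply: supp_filter.
by move=> E0; rewrite Ea E0 add0r.
Qed.

Lemma PV_prime (a b : R) : PV (a * b) -> PV a \/ PV b.
Proof.
move=> Hab.
have [a0 [a1 [Ea Ha1 Na0 Za]]] := split_PV a.
have [b0 [b1 [Eb Hb1 Nb0 Zb]]] := split_PV b.
have E : a0 * b0 = a * b - (a0 * b1 + a1 * b).
  by rewrite Ea Eb; ring.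
have P0 : PV (a0 * b0).
  rewrite E; apply: PVD; first exact: Hab.
  apply: PVN; apply: PVD; first exact: PVM.
  by rewrite mulrC; apply: PVM.
have Z : a0 * b0 = 0.
  apply/eqP; rewrite -msupp_eq0; apply/eqP/fsetP => m; rewrite inE.
  apply/negP => Hm; move/PVP: P0 => /(_ m Hm).
  move: Hm => /msuppM_le [k1 [k2 [H1 H2 ->]]].
  by rewrite hitsM (negbTE (allP Na0 _ H1)) (negbTE (allP Nb0 _ H2)).
by case: (dpoly_dom Z) => [/Za|/Zb]; [left|right].
Qed.

Lemma PV1 : ~~ PV 1.
Proof.
apply/negP => /PVP /(_ mone); rewrite hits1.
have -> : (1 : R) = << mone >> by [].
by rewrite msuppU1 => /(_ (fset11 _)).
Qed.

Lemma PV_prod N (F : 'I_N -> R) (e : 'I_N -> nat) :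
  PV (\prod_(i < N) F i ^+ e i) -> exists i, (0 < e i)%N /\ PV (F i).
Proof.
move=> HP; apply: Classical_Prop.NNPP => H; move: HP; apply/negP.
apply: (big_ind (fun p : R => ~~ PV p)).
- exact: PV1.
- by move=> x y Hx Hy; apply/negP => /PV_prime [] Hc; [move: Hx|move: Hy]; rewrite Hc.
move=> i _.
have NF : (0 < e i)%N -> ~~ PV (F i) by move=> He; apply/negP => HF; apply: H; exists i.
elim: (e i) NF => [|m IH] NF; first by rewrite expr0 PV1.
have nF := NF isT.
rewrite exprS; apply/negP => /PV_prime [HF|HF]; first by rewrite HF in nF.
by move: HF; apply/negP; apply: IH => _.
Qed.

End PV.


Definition isV (P : Prop) : bool :=
  if ClassicalEpsilon.excluded_middle_informative P then true else false.
Lemma isVP (P : Prop) : reflect P (isV P).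
Proof. by rewrite /isV; case: ClassicalEpsilon.excluded_middle_informative; constructor. Qed.

Section Final.
Variables (k : fieldType) (s : {rmorphism k -> k}) (n : nat).
Local Notation X := ('I_n * nat)%type.
Local Notation M := (cmonom X).
Local Notation R := (dpoly k n).
Variable I : R -> Prop.
Hypothesis HI : is_ideal I.
Hypothesis Hmon : is_monomial_ideal I.

Lemma core (a : R) (g : {poly nat}) (m0 Mm : M) :
  m0 \in msupp a ->
  (forall t : 'I_(size g), (0 < (g`_t)%R)%N -> forall x : X,
      x \in finsupp (iter t (@shift n) m0) -> x \in finsupp Mm) ->
  (forall w : M, I (Xm k w) -> hits [pred x | x \notin finsupp Mm] w) ->
  I (dpow s a g) -> False.
Proof.
move=> Hm0 Hsub HW Hag.
pose V := [pred x : X | x \notin finsupp Mm].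
have IPV : forall f, I f -> PV (k:=k) V f.
  move=> f Hf; apply/PVP => m Hm; apply: HW; exact: (char_out HI Hmon Hf Hm).
have := PV_prod (IPV _ Hag) => -[t [Ht HPV]].
have Hin := iter_dsigma_supp s t Hm0.
move/PVP: HPV => /(_ _ Hin) /hitsP [x Hx Vx].
by move: Vx; rewrite inE (Hsub t Ht x Hx).
Qed.

Lemma hI_of (m0 Mm : M) : ~ I (Xm k m0) ->
  (forall d, (0 < d)%N -> I (Xm k (mexp Mm d)) -> I (Xm k m0)) ->
  forall w : M, I (Xm k w) -> hits [pred x | x \notin finsupp Mm] w.
Proof.
move=> Hn Hcl w Hw; apply/negPn/negP => Hh; apply: Hn.
apply: (Hcl (mdeg w).+1 isT); apply: (S_le HI Hw) => x.
rewrite mexpX.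
case: (boolP (x \in finsupp w)) => Hx.
  have HM : x \in finsupp Mm.
    by apply/negPn/negP => HnM; move/negP: Hh; apply; apply/hitsP; exists x.
  have {}HM : (0 < Mm x)%N by rewrite lt0n cmX_eq0 negbK.
  apply: leq_trans (leq_pmulr _ HM); apply: leq_trans (le_mdeg w x) _; exact: leqnSn.
by move: Hx; rewrite -cmX_eq0 => /eqP ->.
Qed.

Lemma prime_back : ~ I 1 ->
  (forall u v : NXn n, I (ymon k (fun i => u i + v i)) -> I (ymon k u) \/ I (ymon k v)) ->
  forall a b : R, I (a * b) -> I a \/ I b.
Proof.
move=> H1 Hpr.
pose V := fun x : X => isV (I (Xm k (ucm x))).
have CB : forall m : M, hits V m -> I (Xm k m).
  move=> m /hitsP [x Hx] /isVP Hu.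
  apply: (S_le HI Hu) => y; rewrite ucmX.
  case: eqP => [<-|]; last by [].
  by rewrite lt0n cmX_eq0 negbK.
have CA : forall d (w : M), (mdeg w <= d)%N -> I (Xm k w) -> hits V w.
  elim=> [|d IH] w Hd Hw.
    have E : w = mone by apply: mdeg_eq0I; apply/eqP; rewrite -leqn0.
    by rewrite E in Hw; case: H1.
  case: (eqVneq w mone) => [E|Hw1]; first by rewrite E in Hw; case: H1.
  have [x Hx] : exists x, x \in finsupp w.
    apply/fset0Pn; apply: contra_neq Hw1 => E.
    apply/eqP/cmP => y; rewrite cm1; apply/eqP.
    by rewrite cmX_eq0 E in_fset0.
  pose w' := divcm w (ucm x).
  have Ew : w = mmul (ucm x) w'.
    apply/eqP/cmP => y.
    have Hle : (ucm x y <= w y)%N.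
      rewrite ucmX; case: eqP => [<-|]; last by [].
      by rewrite lt0n cmX_eq0 negbK.
    have dE : divcm w (ucm x) y = (w y - ucm x y)%N by apply: divcmE.
    by rewrite cmMX dE (subnKC Hle).
  have [u Hu] := mon_surj (ucm x).
  have [v Hv] := mon_surj w'.
  have Huv : I (ymon k (fun i => u i + v i)) by rewrite ymonE monD Hu Hv -Ew.
  case: (Hpr u v Huv) => Hs.
    rewrite ymonE Hu in Hs.
    apply/hitsP; exists x; first exact: Hx.
    by apply/isVP.
  rewrite ymonE Hv in Hs.
  have : hits V w'.
    apply: (IH w'); last exact: Hs.
    by move: Hd; rewrite Ew mdegM mdegU add1n ltnS.
  by rewrite Ew hitsM => ->; rewrite orbT.
move=> a b Hab.
have PVab : PV (k:=k) V (a * b).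
  apply/PVP => m Hm; apply: (CA (mdeg m)); first exact: leqnn.
  exact: (char_out HI Hmon Hab Hm).
case: (PV_prime PVab) => /PVP HP; [left|right]; apply: (char_in HI) => m Hm;
  exact: CB (HP m Hm).
Qed.

End Final.

Lemma cmX_neq0 n (m : cmonom ('I_n * nat)%type%type) (x : ('I_n * nat)%type) :
  (m x != 0%N) = (x \in finsupp m).
Proof. exact: cmE_neq0. Qed.

Lemma dpowC (k : fieldType) (s : {rmorphism k -> k}) (n : nat) (a : dpoly k n) (m : nat) :
  (0 < m)%N -> dpow s a m%:P = a ^+ m.
Proof.
move=> Hm; rewrite /dpow polyseqC.
have -> : (m != 0) = true by rewrite -lt0n.
by rewrite big_ord1.
Qed.

Lemma polyMn_neq0 (g : {poly nat}) d : g != 0 -> (0 < d)%N -> g *+ d != 0.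
Proof.
move=> Hg Hd; apply/negP => /eqP E.
have := congr1 (fun p : {poly nat} => p`_(size g).-1) E.
rewrite coefMn coef0 natmulE => /eqP; rewrite muln_eq0 => /orP[/eqP Hd0|].
  by rewrite Hd0 in Hd.
by apply/negP; rewrite -/(lead_coef g) lead_coef_eq0.
Qed.

Unset Implicit Arguments.

Theorem proposition3p6 (k : fieldType) (s : {rmorphism k -> k}) (n : nat)
  (I : dpoly k n -> Prop) :
  [pchar k] =i pred0 ->
  is_sigma_ideal s I -> is_monomial_ideal I ->
  let S := supp_set I in
  [/\ (is_radical I <->
        forall (m : nat) (u : NXn n), (0 < m)%N ->
          S (fun i => u i *+ m) -> S u),
      (is_reflexive s I <->
        forall u : NXn n, S (fun i => 'X * u i) -> S u),
      (is_perfect s I <->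
        forall (g : {poly nat}) (u : NXn n), g != 0 ->
          S (fun i => g * u i) -> S u)
    & (~ I 1 ->
       (is_prime_ideal I <->
        forall u v : NXn n, S (fun i => u i + v i) -> S u \/ S v))].
Proof.
move=> _ [HI Hsig] Hmon S.
have SE : forall u, S u <-> I (Xm k (mon u)) by move=> u; rewrite /S /supp_set ymonE.
split.
- split.
  + move=> Hrad m u Hm /SE; rewrite monMn Xm_exp => H; apply/SE; exact: Hrad H.
  + move=> Hcl a m Hm Ham; apply: (char_in HI) => m0 Hm0.
    apply: Classical_Prop.NNPP => Hn.
    have [u0 Hu0] := mon_surj m0.
    apply: (@core k s n I HI Hmon a m%:P m0 (mexp m0 m) Hm0).
    * move=> t Ht x; have Et : nat_of_ord t = 0%N by move: Ht; rewrite coefC; case: eqP.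
      rewrite Et /= -!cmX_neq0 mexpX muln_eq0 negb_or => ->; rewrite andbT -lt0n //.
    * apply: (hI_of HI Hn) => d Hd.
      rewrite mexp_mexp => H.
      have : S u0.
        apply: (Hcl (m * d)%N); first by rewrite muln_gt0 Hm.
        by apply/SE; rewrite monMn Hu0.
      by move/SE; rewrite Hu0.
    * by rewrite dpowC.
- split.
  + move=> Hrefl u /SE; rewrite monX -(dsigmaX s) => H; apply/SE; exact: Hrefl H.
  + move=> Hcl a Ha; apply: (char_in HI) => m0 Hm0.
    have [u0 Hu0] := mon_surj m0.
    have := char_out HI Hmon Ha (dsigma_supp s Hm0).
    by rewrite -Hu0 -monX => /SE /Hcl /SE.
- split.
  + move=> Hp g u Hg /SE; rewrite monM -(dpowX s) => H; apply/SE; exact: Hp H.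
  + move=> Hcl a g Hg Hag; apply: (char_in HI) => m0 Hm0.
    apply: Classical_Prop.NNPP => Hn.
    have [u0 Hu0] := mon_surj m0.
    apply: (@core k s n I HI Hmon a g m0 (mon (fun i => g * u0 i)) Hm0); last exact: Hag.
    * move=> t Ht x; rewrite monM Hu0 /dpowm -!cmX_neq0 cm_prod.
      under eq_bigr => t' _ do rewrite mexpX.
      rewrite -!lt0n => Hx; rewrite (bigD1 t) //=.
      by apply: leq_trans (leq_addr _ _); rewrite muln_gt0 Ht.
    * apply: (hI_of HI Hn) => d Hd.
      rewrite -monMn -Hu0.
      have -> : mon (fun i => g * u0 i *+ d) = mon (fun i => (g *+ d) * u0 i).
        by apply: monP => i j; rewrite mulrnAl.
      move=> /SE /Hcl H; apply/SE; apply: H.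
      exact: polyMn_neq0.
- move=> H1; split.
  + move=> [_ [_ Hpr]] u v /SE; rewrite monD XmM => /Hpr [] H; [left|right]; exact/SE.
  + move=> Hpr; split; first exact: HI; split; first exact: H1.
    exact: prime_back.
Qed.
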